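(* In every finite poset model $\mathcal{F}=(W,\preceq,\mathcal{V})$, the relation $\equiv_\eta$ on $W$ is a weak $\pm$-bisimulation.
   Context: Fix a set PL of proposition letters. A poset model is $\mathcal{F}=(W,\preceq,\mathcal{V})$ with $(W,\preceq)$ a partial order and $\mathcal{V}:\mathrm{PL}\to\mathcal{P}(W)$. $[m;n]=\{i\in\mathbb{N}:m\le i\le n\}$, $[m;n)=\{i:m\le i<n\}$. An undirected path of length $\ell$ from $w$ is $\pi:[0;\ell]\to W$ with $\pi(0)=w$ and, for each $i\in[0;\ell)$, $\pi(i)\preceq\pi(i+1)$ or $\pi(i+1)\preceq\pi(i)$. A $\downarrow$-path is an undirected path of length $\ell\ge1$ with $\pi(\ell)\preceq\pi(\ell-1)$. A $\pm$-path is a $\downarrow$-path of length $\ell\ge2$ with $\pi(0)\preceq\pi(1)$. SLCS$_\eta$ formulas: $\Phi::=p\mid\neg\Phi\mid\Phi_1\wedge\Phi_2\mid\eta(\Phi_1,\Phi_2)$; $w\models p$ iff $w\in\mathcal{V}(p)$; negation, conjunction standard; $w\models\eta(\Phi_1,\Phi_2)$ iff some $\pm$-path $\pi:[0;\ell]\to W$ from $w$ has $\pi(\ell)\models\Phi_2$ and $\pi(i)\models\Phi_1$ for all $i\in[0;\ell)$. $w_1\equiv_\eta w_2$ means $w_1,w_2$ satisfy the same SLCS$_\eta$ formulas. A weak $\pm$-bisimulation is a symmetric relation $B\subseteq W\times W$ such that whenever $B(w_1,w_2)$: (1) for every $p$, $w_1\in\mathcal{V}(p)$ iff $w_2\in\mathcal{V}(p)$;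 (2) for all $u_1,d_1\in W$ with ($w_1\preceq u_1$ or $u_1\preceq w_1$) and $d_1\preceq u_1$, there is a $\pm$-path $\pi_2:[0;\ell_2]\to W$ from $w_2$ with $B(d_1,\pi_2(\ell_2))$ and, for all $j\in[0;\ell_2)$, $B(w_1,\pi_2(j))$ or $B(u_1,\pi_2(j))$. *)

(* Defs.v *)
From mathcomp Require Import all_boot.
Set Implicit Arguments.
Unset Strict Implicit.
Unset Printing Implicit Defensive.

Definition is_partial_order (W : Type) (le : W -> W -> Prop) : Prop :=
  (forall w, le w w) /\
  (forall u v, le u v -> le v u -> u = v) /\
  (forall u v w, le u v -> le v w -> le u w).

Section Model.
Variables (PL : Type) (W : Type) (le : W -> W -> Prop) (V : PL -> W -> Prop).

(* An undirected path of length l from w: pi : nat -> W, only indices in [0;l] matter *)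
Definition undirected_path (pi : nat -> W) (l : nat) (w : W) : Prop :=
  pi 0 = w /\ forall i, i < l -> le (pi i) (pi i.+1) \/ le (pi i.+1) (pi i).

Definition down_path (pi : nat -> W) (l : nat) (w : W) : Prop :=
  undirected_path pi l w /\ 1 <= l /\ le (pi l) (pi l.-1).

Definition pm_path (pi : nat -> W) (l : nat) (w : W) : Prop :=
  down_path pi l w /\ 2 <= l /\ le (pi 0) (pi 1).

Inductive form : Type :=
  | FAtom : PL -> form
  | FNot : form -> form
  | FAnd : form -> form -> form
  | FEta : form -> form -> form.

Fixpoint sat (w : W) (f : form) {struct f} : Prop :=
  match f with
  | FAtom p => V p w
  | FNot g => ~ sat w g
  | FAnd g h => sat w g /\ sat w h
  | FEta g h => exists (pi : nat -> W) (l : nat),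
      pm_path pi l w /\ sat (pi l) h /\ forall i, i < l -> sat (pi i) g
  end.

Definition eta_equiv (w1 w2 : W) : Prop := forall f, sat w1 f <-> sat w2 f.

Definition weak_pm_bisim (B : W -> W -> Prop) : Prop :=
  (forall w1 w2, B w1 w2 -> B w2 w1) /\
  forall w1 w2, B w1 w2 ->
    (forall p, V p w1 <-> V p w2) /\
    (forall u1 d1, (le w1 u1 \/ le u1 w1) -> le d1 u1 ->
       exists (pi2 : nat -> W) (l2 : nat),
         pm_path pi2 l2 w2 /\ B d1 (pi2 l2) /\
         forall j, j < l2 -> B w1 (pi2 j) \/ B u1 (pi2 j)).
End Model.

(* Main.v *)
Require Import Defs.
From mathcomp Require Import all_boot.
From Stdlib Require Import Classical.

Section Aux.
Variables (PL : Type) (W : finType) (le : W -> W -> Prop) (V : PL -> W -> Prop).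

Definition fOr (a b : form PL) := FNot (FAnd (FNot a) (FNot b)).

Lemma distinguish (x y : W) : ~ eta_equiv le V x y ->
  exists f, sat le V x f /\ ~ sat le V y f.
Proof.
move=> H; apply: NNPP => Hn; apply: H => f; split => Hf.
- apply: NNPP => Hy; apply: Hn; by exists f.
- apply: NNPP => Hx; apply: Hn; exists (FNot f); simpl; tauto.
Qed.

Lemma charf (f0 : form PL) (x : W) (s : seq W) : exists chi,
  sat le V x chi /\ forall y, y \in s -> ~ eta_equiv le V x y -> ~ sat le V y chi.
Proof.
elim: s => [|a s [chi [Hx Hs]]].
- exists (FNot (FAnd f0 (FNot f0))); split => //=; tauto.
- case: (classic (eta_equiv le V x a)) => Ha.
  + exists chi; split => // y; rewrite in_cons => /orP [/eqP -> //|]; exact: Hs.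
  + have [g [Hg1 Hg2]] := distinguish x a Ha.
    exists (FAnd chi g); split => //= y; rewrite in_cons => /orP [/eqP -> _|Hy Hne].
    * tauto.
    * have := Hs y Hy Hne; tauto.
Qed.

Lemma charf_full (f0 : form PL) (x : W) : exists chi,
  forall y, sat le V y chi <-> eta_equiv le V x y.
Proof.
have [chi [Hx Hs]] := charf f0 x (enum W).
exists chi => y; split.
- move=> Hy; apply: NNPP => Hn; apply: (Hs y _ Hn Hy); by rewrite mem_enum.
- by move=> /(_ chi) /proj1 /(_ Hx).
Qed.
End Aux.

Theorem lemma13 (PL : Type) (W : finType) (le : W -> W -> Prop)
    (V : PL -> W -> Prop) :
  is_partial_order le ->
  weak_pm_bisim le V (eta_equiv le V).
Proof.
move=> [Hrefl _]; split.
  by move=> w1 w2 H f; split => /(H f).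
move=> w1 w2 H; split.
  by move=> p; exact: (H (FAtom p)).
move=> u1 d1 Hwu Hdu.
case: (classic (exists p : PL, True)) => [[p _]|Hnp]; last first.
  have Hall : forall a b, eta_equiv le V a b.
    move=> a b f; exfalso; elim: f => //= q; apply: Hnp; by exists q.
  exists (fun _ => w2), 2; split; last by split; [apply: Hall| move=> j _; left; apply: Hall].
  split; last by split.
  split; last by split.
  split => // i _; left; exact: Hrefl.
have [c1 Hc1] := @charf_full PL W le V (FAtom p) w1.
have [c2 Hc2] := @charf_full PL W le V (FAtom p) u1.
have [c3 Hc3] := @charf_full PL W le V (FAtom p) d1.
have Hsat : sat le V w1 (FEta (fOr PL c1 c2) c3).
  exists (fun i => match i with 0 | 1 => w1 | 2 => u1 | _ => d1 end), 3.
  split; last split.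
  - split; last by split.
    split; last by split.
    split => // i; case: i => [|[|[|i]]] // _; first [left; exact: Hrefl|tauto|right; exact: Hdu].
  - apply/Hc3 => f; tauto.
  - move=> i; case: i => [|[|[|i]]] // _ /=;
      rewrite Hc1 Hc2 => -[Ha Hb]; [apply: Ha|apply: Ha|apply: Hb] => f; tauto.
have := proj1 (H _) Hsat => -[pi [l [Hp [Hl Hi]]]].
exists pi, l; split => //; split.
  move/Hc3: Hl => E f; split => /(E f); tauto.
move=> j Hj; have Hn := Hi j Hj.
apply: NNPP => Hn2; apply: Hn; split => Hq; apply: Hn2; [left; move/Hc1: Hq|right; move/Hc2: Hq] => E f; split => /(E f); tauto.
Qed.
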